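(* For every sufficiently large integer $n$, there is a complete Riemannian metric of positive Ricci curvature on $\mathbb{R}^n$ such that for every point $p\in\mathbb{R}^n$, $$\limsup_{r\to\infty}\frac{\operatorname{diam}(\partial B(p,r))}{r}\geq 1.$$
   Context: $\partial B(p,r)$ is the set of points at distance exactly $r$ from $p$, and its diameter is measured with the Riemannian distance of the metric on $\mathbb{R}^n$. *)

(* Defs.v *)
From HB Require Import structures.
From mathcomp Require Import all_boot all_order all_algebra.
From mathcomp Require Import all_classical all_reals all_analysis.
Set Implicit Arguments. Unset Strict Implicit. Unset Printing Implicit Defensive.
Import Order.TTheory GRing.Theory Num.Theory.
Import numFieldNormedType.Exports.
Local Open Scope classical_set_scope.
Local Open Scope ring_scope.

Section RiemDefs.
Variables (R : realType) (n : nat).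
Notation V := 'rV[R]_n.

Definition ebasis (i : 'I_n) : V := delta_mx 0 i.

Definition partial (i : 'I_n) (f : V -> R) : V -> R :=
  fun x => derive f x (ebasis i).

Definition iter_partial (l : seq 'I_n) (f : V -> R) : V -> R :=
  foldr partial f l.

Definition smooth (f : V -> R) : Prop :=
  forall l : seq 'I_n,
    continuous (iter_partial l f) /\
    forall (i : 'I_n) (x : V), derivable (iter_partial l f) x (ebasis i).

Definition riemannian_metric (g : V -> 'M[R]_n) : Prop :=
  (forall i j, smooth (fun x => g x i j)) /\
  (forall x, (g x)^T = g x) /\
  (forall x (v : V), v != 0 -> 0 < \sum_i \sum_j v 0 i * v 0 j * g x i j).

Definition christoffel (g : V -> 'M[R]_n) (k i j : 'I_n) (x : V) : R :=
  2^-1 * \sum_l invmx (g x) k l *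
    (partial i (fun y => g y j l) x + partial j (fun y => g y i l) x
     - partial l (fun y => g y i j) x).

Definition ricci (g : V -> 'M[R]_n) (i j : 'I_n) (x : V) : R :=
  \sum_k (partial k (christoffel g k i j) x - partial j (christoffel g k i k) x)
  + \sum_k \sum_l (christoffel g k k l x * christoffel g l i j x
                   - christoffel g k j l x * christoffel g l i k x).

Definition positive_ricci (g : V -> 'M[R]_n) : Prop :=
  forall x (v : V), v != 0 -> 0 < \sum_i \sum_j v 0 i * v 0 j * ricci g i j x.

(* C^1 curves R -> R^n (only their restriction to [0,1] matters) *)
Definition C1_curve (c : R -> V) : Prop :=
  (forall t, derivable c t 1) /\ continuous (derive1 c).

Definition curve_length (g : V -> 'M[R]_n) (c : R -> V) : R :=
  Rintegral (@lebesgue_measure R) `[0, 1]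
    (fun t => Num.sqrt (\sum_i \sum_j
        (derive1 c t) 0 i * (derive1 c t) 0 j * g (c t) i j)).

Definition riem_dist (g : V -> 'M[R]_n) (p q : V) : R :=
  inf [set L | exists c, [/\ C1_curve c, c 0 = p, c 1 = q &
                            L = curve_length g c]].

Definition complete_metric (g : V -> 'M[R]_n) : Prop :=
  forall u : nat -> V,
    (forall e : R, 0 < e -> exists N, forall m k, (N <= m)%N -> (N <= k)%N ->
        riem_dist g (u m) (u k) < e) ->
    exists l : V, forall e : R, 0 < e -> exists N, forall m, (N <= m)%N ->
        riem_dist g (u m) l < e.

Definition metric_sphere (g : V -> 'M[R]_n) (p : V) (r : R) : set V :=
  [set q | riem_dist g p q = r].

(* diameter (in the extended reals; -oo for the empty set) *)
Definition riem_diam (g : V -> 'M[R]_n) (A : set V) : \bar R :=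
  ereal_sup [set ((riem_dist g x y)%:E) | x in A & y in A].

End RiemDefs.

(* Main.v *)
Require Import Defs.
From HB Require Import structures.
From mathcomp Require Import all_boot all_order all_algebra.
From mathcomp Require Import all_classical all_reals all_analysis.
From mathcomp Require Import ring lra.
Import Order.TTheory GRing.Theory Num.Theory.
Import numFieldNormedType.Exports.
Local Open Scope classical_set_scope.
Local Open Scope ring_scope.
Set Implicit Arguments. Unset Strict Implicit. Unset Printing Implicit Defensive.
Section Main.
Variable R : realType.
Variable n : nat.
Local Notation V := 'rV[R]_n.

Definition dot (u v : V) : R := \sum_i u 0 i * v 0 i.
Definition sq (y : V) : R := dot y y.
Definition qf (y : V) : R := (1 + sq y)^-1.
Definition pf (y : V) : R := (1 + 2 * sq y)^-1.
Definition gm (y : V) : 'M[R]_n :=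
  \matrix_(i, j) ((i == j)%:R + qf y * (y 0 i * y 0 j)).
Definition dl (i j : 'I_n) : R := (i == j)%:R.

Lemma dlC i j : dl i j = dl j i.
Proof. by rewrite /dl eq_sym. Qed.

Lemma sum_dl (F : 'I_n -> R) i : \sum_k dl k i * F k = F i.
Proof.
rewrite (bigD1 i) //= /dl eqxx mul1r big1 ?addr0 // => k /negbTE ->.
by rewrite mul0r.
Qed.

Lemma sum_dl' (F : 'I_n -> R) i : \sum_k dl i k * F k = F i.
Proof. by under eq_bigr do rewrite dlC; exact: sum_dl. Qed.

Lemma sq_ge0 y : 0 <= sq y.
Proof. by apply: sumr_ge0 => i _; rewrite -expr2 sqr_ge0. Qed.

Lemma qf_gt0 y : 0 < qf y.
Proof. by rewrite /qf invr_gt0; have := sq_ge0 y; lra. Qed.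
Lemma pf_gt0 y : 0 < pf y.
Proof. by rewrite /pf invr_gt0; have := sq_ge0 y; lra. Qed.
Lemma qfE y : qf y * (1 + sq y) = 1.
Proof. by rewrite /qf mulVf // gt_eqF //; have := sq_ge0 y; lra. Qed.
Lemma pfE y : pf y * (1 + 2 * sq y) = 1.
Proof. by rewrite /pf mulVf // gt_eqF //; have := sq_ge0 y; lra. Qed.

Lemma Qform x (v : V) :
  \sum_i \sum_j v 0 i * v 0 j * gm x i j = sq v + qf x * (dot x v) ^+ 2.
Proof.
under eq_bigr do under eq_bigr do rewrite mxE.
have -> : \sum_i \sum_j v 0 i * v 0 j * ((i == j)%:R + qf x * (x 0 i * x 0 j))
  = \sum_i \sum_j (dl j i * (v 0 i * v 0 j) + qf x * ((x 0 i * v 0 i) * (x 0 j * v 0 j))).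
  by apply: eq_bigr => i _; apply: eq_bigr => j _; rewrite /dl eq_sym; ring.
under eq_bigr do rewrite big_split /= sum_dl -mulr_sumr -mulr_sumr.
rewrite big_split /= -mulr_sumr -mulr_suml /sq /dot expr2; congr (_ + _).
Qed.


Lemma is_derive_coord (x v : V) i : is_derive x v (fun y : V => y 0 i) (v 0 i).
Proof.
apply: DeriveDef; first exact/diff_derivable/differentiable_coord.
rewrite deriveE; last exact: differentiable_coord.
have @f : {linear V -> R}.
  by exists (fun N : V => N 0 i); do 2![eexists]; do ?[constructor];
     rewrite ?mxE// => ? *; rewrite ?mxE//; move=> ?; rewrite !mxE.
rewrite (_ : (fun _ => _) = f) //.
by rewrite diff_lin //; apply: coord_continuous.
Qed.

Lemma dD (f g : V -> R) x v a b : is_derive x v f a -> is_derive x v g b ->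
  is_derive x v (fun y => f y + g y) (a + b).
Proof. by move=> ha hb; exact: is_deriveD. Qed.

Lemma dB (f g : V -> R) x v a b : is_derive x v f a -> is_derive x v g b ->
  is_derive x v (fun y => f y - g y) (a - b).
Proof. by move=> ha hb; exact: is_deriveB. Qed.

Lemma dM (f g : V -> R) x v a b : is_derive x v f a -> is_derive x v g b ->
  is_derive x v (fun y => f y * g y) (f x * b + g x * a).
Proof. by move=> ha hb; exact: is_deriveM. Qed.

Lemma dC (c : R) x v : is_derive x v (fun _ : V => c) 0.
Proof. exact: is_derive_cst. Qed.

Lemma dV (f : V -> R) x v a : f x != 0 -> is_derive x v f a ->
  is_derive x v (fun y => (f y)^-1) (- (f x)^-2 * a).
Proof.
move=> fx0 [df dfv]; apply: DeriveDef; first exact: derivableV.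
by rewrite deriveV // dfv.
Qed.

Lemma dS (h : 'I_n -> V -> R) (dh : 'I_n -> R) x v :
  (forall i, is_derive x v (h i) (dh i)) ->
  is_derive x v (fun y => \sum_i h i y) (\sum_i dh i).
Proof.
move=> hd; have -> : (fun y => \sum_i h i y) = \sum_i h i by rewrite fct_sumE.
exact: is_derive_sum.
Qed.

Lemma dE (f : V -> R) x v a b : is_derive x v f a -> a = b -> is_derive x v f b.
Proof. by move=> h <-. Qed.

Lemma d_sq x v : is_derive x v sq (2 * dot x v).
Proof.
apply: dE; first by apply: dS => i; apply: dM; apply: is_derive_coord.
by rewrite /dot mulr_sumr; apply: eq_bigr => i _; ring.
Qed.

Lemma d_qf x v : is_derive x v qf (- qf x ^+ 2 * (2 * dot x v)).
Proof.
have h : is_derive x v (fun y => 1 + sq y) (0 + 2 * dot x v).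
  exact: (dD (dC 1 x v) (d_sq x v)).
have h0 : 1 + sq x != 0 by rewrite gt_eqF //; have := sq_ge0 x; lra.
have := dV h0 h; rewrite /qf exprVn add0r; exact.
Qed.

Lemma d_pf x v : is_derive x v pf (- pf x ^+ 2 * (2 * (2 * dot x v))).
Proof.
have h : is_derive x v (fun y => 1 + 2 * sq y) (0 + (2 * (2 * dot x v) + sq x * 0)).
  exact: (dD (dC 1 x v) (dM (dC 2 x v) (d_sq x v))).
have h0 : 1 + 2 * sq x != 0 by rewrite gt_eqF //; have := sq_ge0 x; lra.
have := dV h0 h; rewrite /pf exprVn add0r mulr0 addr0; exact.
Qed.

Lemma dot_eb x k : dot x (ebasis R k) = x 0 k.
Proof.
rewrite /dot (bigD1 k) //= /ebasis mxE !eqxx /= mulr1 big1 ?addr0 // => i ik.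
by rewrite mxE (negbTE ik) andbF mulr0.
Qed.

Lemma eb_coord k i : (ebasis R k : V) 0 i = dl k i.
Proof. by rewrite /ebasis mxE /dl eqxx eq_sym. Qed.

Lemma derive_val' (f : V -> R) x v a : is_derive x v f a -> 'D_v f x = a.
Proof. by move=> h; rewrite derive_val. Qed.


Inductive SC : (V -> R) -> Prop :=
| SCc c : SC (fun _ => c)
| SCx i : SC (fun y => y 0 i)
| SCq : SC qf
| SCadd f h : SC f -> SC h -> SC (fun y => f y + h y)
| SCmul f h : SC f -> SC h -> SC (fun y => f y * h y).

Lemma SC_ext f g : f =1 g -> SC f -> SC g.
Proof. by move=> /funext ->. Qed.

Lemma diff_sq x : differentiable sq x.
Proof.
have -> : sq = \sum_i (fun y : V => y 0 i * y 0 i).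
  by rewrite fct_sumE; apply/funext => y.
apply: differentiable_sum => i; apply: differentiableM; exact: differentiable_coord.
Qed.

Lemma diff_qf x : differentiable qf x.
Proof.
apply: differentiableV; last by rewrite gt_eqF //; have := sq_ge0 x; lra.
apply: differentiableD; [exact: differentiable_cst | exact: diff_sq].
Qed.

Lemma SC_diff f : SC f -> forall x, differentiable f x.
Proof.
elim => [c|i||f1 h _ IHf _ IHh|f1 h _ IHf _ IHh] x.
- exact: differentiable_cst.
- exact: differentiable_coord.
- exact: diff_qf.
- exact: differentiableD.
- exact: differentiableM.
Qed.

Lemma SC_is_derive f x v : SC f -> is_derive x v f ('D_v f x).
Proof. by move=> /SC_diff hf; apply/derivableP/diff_derivable. Qed.

Lemma SC_partial f : SC f -> forall k, SC (partial k f).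
Proof.
elim => [c|i||f1 h Hf IHf Hh IHh|f1 h Hf IHf Hh IHh] k.
- apply: (@SC_ext (fun _ => 0)); last exact: SCc.
  by move=> x; rewrite /partial (derive_val' (dC c x _)).
- apply: (@SC_ext (fun _ => dl k i)); last exact: SCc.
  by move=> x; rewrite /partial (derive_val' (is_derive_coord x _ i)) eb_coord.
- apply: (@SC_ext (fun y => (qf y * qf y) * ((-2) * y 0 k))).
    move=> x; rewrite /partial (derive_val' (d_qf x _)) dot_eb; ring.
  by apply: SCmul; apply: SCmul; constructor.
- apply: (@SC_ext (fun y => partial k f1 y + partial k h y)); last exact: SCadd.
  move=> x; rewrite /partial.
  by rewrite (derive_val' (dD (SC_is_derive x _ Hf) (SC_is_derive x _ Hh))).
- apply: (@SC_ext (fun y => f1 y * partial k h y + h y * partial k f1 y)).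
    move=> x; rewrite /partial.
    by rewrite (derive_val' (dM (SC_is_derive x _ Hf) (SC_is_derive x _ Hh))).
  by apply: SCadd; apply: SCmul.
Qed.

Lemma SC_smooth f : SC f -> smooth f.
Proof.
move=> Hf l.
have Hl : SC (iter_partial l f).
  elim: l => [|a l IH] //=; exact: SC_partial.
split.
  by move=> x; apply: differentiable_continuous; exact: SC_diff.
by move=> i x; apply: diff_derivable; exact: SC_diff.
Qed.

Lemma sq_gt0 (v : V) : v != 0 -> 0 < sq v.
Proof.
move=> v0; rewrite lt_neqAle sq_ge0 andbT; apply/negP => /eqP h.
move/eqP: v0; apply; apply/matrixP => i j; rewrite ord1 mxE.
have h2 : forall i : 'I_n, true -> 0 <= v 0 i * v 0 i.
  by move=> k _; rewrite -expr2 sqr_ge0.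
have /eqP := (psumr_eq0P h2 (esym h)) j isT.
by rewrite mulf_eq0 orbb => /eqP.
Qed.

Lemma gm_metric : riemannian_metric gm.
Proof.
split; [|split].
- move=> i j; apply: SC_smooth.
  apply: (@SC_ext (fun y => (i == j)%:R + qf y * (y 0 i * y 0 j))).
    by move=> y; rewrite mxE.
  by apply: SCadd; [exact: SCc|apply: SCmul; [exact: SCq|apply: SCmul; exact: SCx]].
- by move=> x; apply/matrixP => i j; rewrite !mxE eq_sym mulrC (mulrC (x 0 j)) (mulrC (qf x)).
- move=> x v v0; rewrite Qform.
  have := sq_gt0 v0; have := qf_gt0 x; have := sqr_ge0 (dot x v).
  by move=> h1 h2 h3; apply: (lt_le_trans h3); rewrite lerDl mulr_ge0 // ltW.
Qed.


Definition Hm (y : V) : 'M[R]_n := \matrix_(i, j) (dl i j - pf y * (y 0 i * y 0 j)).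

Lemma qp_id y : qf y - pf y - qf y * pf y * sq y = 0.
Proof.
transitivity (qf y * pf y * ((1 + 2 * sq y) - (1 + sq y) - sq y)
   - qf y * (pf y * (1 + 2 * sq y) - 1) + pf y * (qf y * (1 + sq y) - 1)).
  by ring.
by rewrite pfE qfE !subrr; ring.
Qed.

Lemma gmHm y : gm y *m Hm y = 1%:M.
Proof.
apply/matrixP => i j; rewrite !mxE.
have step : forall l, gm y i l * Hm y l j =
   dl i l * (dl l j - pf y * (y 0 l * y 0 j)) + dl l j * (qf y * y 0 i * y 0 l)
   - (qf y * pf y * y 0 i * y 0 j) * (y 0 l * y 0 l).
  by move=> l; rewrite !mxE -/(dl i l); ring.
under eq_bigr do rewrite step.
rewrite sumrB big_split /= sum_dl' sum_dl -mulr_sumr.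
change (\sum_l y 0 l * y 0 l) with (sq y).
have h := qp_id y; rewrite -/(dl i j).
transitivity (dl i j + (y 0 i * y 0 j) * (qf y - pf y - qf y * pf y * sq y)).
  by ring.
by rewrite h mulr0 addr0.
Qed.

Lemma inv_gm y : invmx (gm y) = Hm y.
Proof.
have [u _] := mulmx1_unit (gmHm y).
by rewrite -[invmx _]mulmx1 -(gmHm y) mulmxA mulVmx // mul1mx.
Qed.

Lemma partial_g i j l x : partial i (fun y => gm y j l) x =
  - qf x ^+ 2 * (2 * x 0 i) * (x 0 j * x 0 l) + qf x * (dl i j * x 0 l + x 0 j * dl i l).
Proof.
have -> : (fun y => gm y j l) = (fun y => dl j l + qf y * (y 0 j * y 0 l)).
  by apply/funext => y; rewrite mxE.
rewrite /partial (derive_val' (dD (dC _ x _) (dM (d_qf x _)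
   (dM (is_derive_coord x _ j) (is_derive_coord x _ l))))).
rewrite dot_eb !eb_coord; ring.
Qed.

Lemma chris x k i j : christoffel gm k i j x =
  pf x * x 0 k * (dl i j - qf x * (x 0 i * x 0 j)).
Proof.
rewrite /christoffel inv_gm.
set C := 2 * qf x * (dl i j - qf x * (x 0 i * x 0 j)).
have step : forall l, Hm x k l * (partial i (fun y => gm y j l) x
    + partial j (fun y => gm y i l) x - partial l (fun y => gm y i j) x)
  = dl k l * (x 0 l * C) - (pf x * x 0 k) * ((x 0 l * x 0 l) * C).
  move=> l; rewrite !partial_g mxE /C (dlC j i) (dlC l i) (dlC l j); ring.
under eq_bigr do rewrite step.
rewrite sumrB sum_dl' -mulr_sumr -mulr_suml.
change (\sum_l x 0 l * x 0 l) with (sq x).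
have h := qp_id x.
rewrite /C.
apply/eqP; rewrite -subr_eq0; apply/eqP.
transitivity (x 0 k * (dl i j - qf x * (x 0 i * x 0 j)) *
   (qf x - pf x - qf x * pf x * sq x)).
  by field.
by rewrite h mulr0.
Qed.

Lemma chrisE k i j : christoffel gm k i j =
  (fun x => pf x * x 0 k * (dl i j - qf x * (x 0 i * x 0 j))).
Proof. by apply/funext => x; rewrite chris. Qed.


Definition Dg k a b c (x : V) : R :=
  - 4 * pf x ^+ 2 * x 0 k * x 0 a * (dl b c - qf x * (x 0 b * x 0 c))
  + pf x * dl k a * (dl b c - qf x * (x 0 b * x 0 c))
  + pf x * x 0 a * (2 * qf x ^+ 2 * x 0 k * x 0 b * x 0 c
                    - qf x * (dl k b * x 0 c + x 0 b * dl k c)).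

Lemma dGam k a b c x : partial k (christoffel gm a b c) x = Dg k a b c x.
Proof.
rewrite chrisE /partial.
rewrite (derive_val' (dM (dM (d_pf x _) (is_derive_coord x _ a))
   (dB (dC _ x _) (dM (d_qf x _)
      (dM (is_derive_coord x _ b) (is_derive_coord x _ c)))))).
rewrite /Dg !dot_eb !eb_coord; ring.
Qed.

Lemma sum_const (c : R) : \sum_(k < n) c = n%:R * c.
Proof. by rewrite sumr_const card_ord mulr_natl. Qed.

Definition alpha (x : V) : R :=
  - 4 * pf x ^+ 2 * sq x + n%:R * pf x - pf x + pf x * qf x * sq x
  + pf x ^+ 2 * sq x - pf x ^+ 2 * qf x * sq x ^+ 2.
Definition beta (x : V) : R :=
  - n%:R * pf x * qf x + 3 * pf x ^+ 2 + pf x ^+ 2 * qf x * sq x.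

Lemma ricciE i j x : ricci gm i j x = alpha x * dl i j + beta x * (x 0 i * x 0 j).
Proof.
rewrite /ricci.
under eq_bigr do rewrite !dGam.
under [X in _ + X]eq_bigr do under eq_bigr do rewrite !chris.
rewrite sumrB.
under [X in _ + X]eq_bigr do rewrite sumrB.
rewrite sumrB.
have Hs : \sum_k x 0 k * x 0 k = (sq x) by [].
have S1 : \sum_k Dg k k i j x = - 4 * (pf x) ^+ 2 * (sq x) * (dl i j - (qf x) * (x 0 i * x 0 j))
    + n%:R * ((pf x) * (dl i j - (qf x) * (x 0 i * x 0 j)))
    + 2 * (pf x) * (qf x) ^+ 2 * (sq x) * (x 0 i * x 0 j)
    - (pf x) * (qf x) * (x 0 j * x 0 i + x 0 i * x 0 j).
  have e : forall k, Dg k k i j x =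
     (x 0 k * x 0 k) * (- 4 * (pf x) ^+ 2 * (dl i j - (qf x) * (x 0 i * x 0 j))
                        + 2 * (pf x) * (qf x) ^+ 2 * (x 0 i * x 0 j))
     + (pf x) * (dl i j - (qf x) * (x 0 i * x 0 j))
     - (pf x) * (qf x) * (x 0 j * (dl k i * x 0 k) + x 0 i * (dl k j * x 0 k)).
    move=> k; have dkk : dl k k = 1 by rewrite /dl eqxx.
    by rewrite /Dg dkk; ring.
  under eq_bigr do rewrite e.
  rewrite sumrB big_split /= -mulr_suml Hs sum_const -mulr_sumr big_split /=
    -!mulr_sumr !sum_dl; ring.
have S2 : \sum_k Dg j k i k x = - 4 * (pf x) ^+ 2 * x 0 j * x 0 i
    + 4 * (pf x) ^+ 2 * (qf x) * (sq x) * (x 0 j * x 0 i) + (pf x) * dl i j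
    - (pf x) * (qf x) * x 0 i * x 0 j + 2 * (pf x) * (qf x) ^+ 2 * (sq x) * (x 0 j * x 0 i)
    - (pf x) * (qf x) * (sq x) * dl j i - (pf x) * (qf x) * x 0 i * x 0 j.
  have e : forall k, Dg j k i k x =
      - 4 * (pf x) ^+ 2 * x 0 j * (dl i k * x 0 k)
      + (x 0 k * x 0 k) * (4 * (pf x) ^+ 2 * (qf x) * (x 0 j * x 0 i)
                           + 2 * (pf x) * (qf x) ^+ 2 * (x 0 j * x 0 i) - (pf x) * (qf x) * dl j i)
      + (pf x) * (dl j k * dl i k)
      - (pf x) * (qf x) * x 0 i * (dl j k * x 0 k) - (pf x) * (qf x) * x 0 i * (dl j k * x 0 k).
    by move=> k; rewrite /Dg; ring.
  under eq_bigr do rewrite e.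
  rewrite !sumrB !big_split /= -!mulr_sumr -mulr_suml Hs !sum_dl'; ring.
have S3 : \sum_k \sum_l ((pf x) * x 0 k * (dl k l - (qf x) * (x 0 k * x 0 l)) *
      ((pf x) * x 0 l * (dl i j - (qf x) * (x 0 i * x 0 j))))
    = (pf x) ^+ 2 * (dl i j - (qf x) * (x 0 i * x 0 j)) * ((sq x) - (qf x) * (sq x) ^+ 2).
  have e : forall k l, (pf x) * x 0 k * (dl k l - (qf x) * (x 0 k * x 0 l)) *
      ((pf x) * x 0 l * (dl i j - (qf x) * (x 0 i * x 0 j)))
      = dl k l * ((pf x) ^+ 2 * (dl i j - (qf x) * (x 0 i * x 0 j)) * x 0 k * x 0 l)
        - ((pf x) ^+ 2 * (qf x) * (dl i j - (qf x) * (x 0 i * x 0 j)) * (x 0 k * x 0 k))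
          * (x 0 l * x 0 l).
    by move=> k l; ring.
  under eq_bigr do under eq_bigr do rewrite e.
  under eq_bigr do rewrite sumrB sum_dl' -mulr_sumr Hs.
  have e3 : forall k, (pf x) ^+ 2 * (dl i j - (qf x) * (x 0 i * x 0 j)) * x 0 k * x 0 k -
      (pf x) ^+ 2 * (qf x) * (dl i j - (qf x) * (x 0 i * x 0 j)) * (x 0 k * x 0 k) * (sq x)
      = ((pf x) ^+ 2 * (dl i j - (qf x) * (x 0 i * x 0 j)) * (1 - qf x * sq x)) * (x 0 k * x 0 k).
    by move=> k; ring.
  under eq_bigr do rewrite e3.
  rewrite -mulr_sumr Hs; ring.
have S4 : \sum_k \sum_l ((pf x) * x 0 k * (dl j l - (qf x) * (x 0 j * x 0 l)) *
      ((pf x) * x 0 l * (dl i k - (qf x) * (x 0 i * x 0 k))))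
    = (pf x) ^+ 2 * (x 0 j - (qf x) * x 0 j * (sq x)) * (x 0 i - (qf x) * x 0 i * (sq x)).
  have e : forall k l, (pf x) * x 0 k * (dl j l - (qf x) * (x 0 j * x 0 l)) *
      ((pf x) * x 0 l * (dl i k - (qf x) * (x 0 i * x 0 k)))
      = dl j l * ((pf x) ^+ 2 * x 0 k * (dl i k - (qf x) * (x 0 i * x 0 k)) * x 0 l)
        - ((pf x) ^+ 2 * (qf x) * x 0 j * x 0 k * (dl i k - (qf x) * (x 0 i * x 0 k)))
          * (x 0 l * x 0 l).
    by move=> k l; ring.
  under eq_bigr do under eq_bigr do rewrite e.
  under eq_bigr do rewrite sumrB sum_dl' -mulr_sumr Hs.
  have e2 : forall k, (pf x) ^+ 2 * x 0 k * (dl i k - (qf x) * (x 0 i * x 0 k)) * x 0 j -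
      (pf x) ^+ 2 * (qf x) * x 0 j * x 0 k * (dl i k - (qf x) * (x 0 i * x 0 k)) * (sq x)
      = ((pf x) ^+ 2 * x 0 j * (1 - (qf x) * (sq x))) * (dl i k * x 0 k)
        - ((pf x) ^+ 2 * x 0 j * (1 - (qf x) * (sq x)) * (qf x) * x 0 i) * (x 0 k * x 0 k).
    by move=> k; ring.
  under eq_bigr do rewrite e2.
  rewrite sumrB -!mulr_sumr sum_dl' Hs; ring.
rewrite S1 S2 S3 S4 /alpha /beta (dlC j i); ring.
Qed.


Lemma cauchy_schwarz (x v : V) : dot x v ^+ 2 <= sq x * sq v.
Proof.
have h : 0 <= \sum_i \sum_j (x 0 i * v 0 j - x 0 j * v 0 i) ^+ 2.
  by apply: sumr_ge0 => i _; apply: sumr_ge0 => j _; apply: sqr_ge0.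
have e : \sum_i \sum_j (x 0 i * v 0 j - x 0 j * v 0 i) ^+ 2
   = 2 * (sq x * sq v - dot x v ^+ 2).
  have e1 : forall i j, (x 0 i * v 0 j - x 0 j * v 0 i) ^+ 2 =
     (x 0 i * x 0 i) * (v 0 j * v 0 j) + (v 0 i * v 0 i) * (x 0 j * x 0 j)
     - (2 * (x 0 i * v 0 i)) * (x 0 j * v 0 j).
    by move=> i j; ring.
  under eq_bigr do under eq_bigr do rewrite e1.
  under eq_bigr do rewrite sumrB big_split /= -!mulr_sumr.
  rewrite sumrB big_split /= -!mulr_suml /sq /dot expr2.
  rewrite -mulr_sumr; ring.
move: h; rewrite e; have : (0 : R) < 2 by [].
move=> h2 h; have := h; rewrite pmulr_rge0 // subr_ge0; exact.
Qed.

Lemma alpha_pos x : (3 <= n)%N -> 0 < alpha x.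
Proof.
move=> hn.
have e : alpha x = pf x * (n%:R - 3 + 2 * pf x + qf x * sq x + pf x * sq x * qf x)
   - 2 * pf x * (pf x * (1 + 2 * sq x) - 1) - pf x ^+ 2 * sq x * (qf x * (1 + sq x) - 1).
  by rewrite /alpha; ring.
rewrite e pfE qfE !subrr !mulr0 !subr0.
have h3 : (3 : R) <= n%:R by rewrite ler_nat.
have hp := pf_gt0 x; have hq := qf_gt0 x; have hs := sq_ge0 x.
apply: mulr_gt0 => //.
have : 0 <= qf x * sq x by rewrite mulr_ge0 // ltW.
have : 0 <= pf x * sq x * qf x by rewrite !mulr_ge0 // ltW.
lra.
Qed.

Lemma ab_pos x : (2 <= n)%N -> 0 < alpha x + beta x * sq x.
Proof.
move=> hn.
have e : alpha x + beta x * sq x = (n%:R - 1) * pf x * qf x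
   - n%:R * pf x * (qf x * (1 + sq x) - 1) + pf x * (qf x * (1 + sq x) - 1).
  by rewrite /alpha /beta; ring.
rewrite e qfE !subrr !mulr0 subr0 addr0.
have h2 : (2 : R) <= n%:R by rewrite ler_nat.
have hp := pf_gt0 x; have hq := qf_gt0 x.
by rewrite mulr_gt0 // mulr_gt0 //; lra.
Qed.

Lemma gm_ricci : (4 <= n)%N -> positive_ricci gm.
Proof.
move=> hn x v v0.
under eq_bigr do under eq_bigr do rewrite ricciE.
have -> : \sum_i \sum_j v 0 i * v 0 j * (alpha x * dl i j + beta x * (x 0 i * x 0 j))
   = alpha x * sq v + beta x * dot x v ^+ 2.
  have e : forall i j, v 0 i * v 0 j * (alpha x * dl i j + beta x * (x 0 i * x 0 j))
     = dl j i * (alpha x * (v 0 i * v 0 j)) + beta x * (x 0 i * v 0 i) * (x 0 j * v 0 j).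
    by move=> i j; rewrite (dlC i j); ring.
  under eq_bigr do under eq_bigr do rewrite e.
  under eq_bigr do rewrite big_split /= sum_dl -mulr_sumr.
  rewrite big_split /= -mulr_sumr -mulr_suml -mulr_sumr /sq /dot expr2; ring.
have ha := alpha_pos x (leq_trans (isT : (3 <= 4)%N) hn).
have hab := ab_pos x (leq_trans (isT : (2 <= 4)%N) hn).
have hv := sq_gt0 v0.
have hcs := cauchy_schwarz x v.
have hd := sqr_ge0 (dot x v).
case: (lerP 0 (beta x)) => hb.
  apply: (lt_le_trans (mulr_gt0 ha hv)); rewrite lerDl mulr_ge0 //.
have h1 : beta x * (sq x * sq v) <= beta x * dot x v ^+ 2.
  by rewrite ler_wnM2l // ltW.
apply: (lt_le_trans (mulr_gt0 hab hv)).
have -> : (alpha x + beta x * sq x) * sq v = alpha x * sq v + beta x * (sq x * sq v) by ring.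
by rewrite lerD2l.
Qed.


Lemma cD (f g : R -> R) : continuous f -> continuous g -> continuous (fun t => f t + g t).
Proof. move=> hf hg t; have := continuousD (hf t) (hg t); exact. Qed.
Lemma cM (f g : R -> R) : continuous f -> continuous g -> continuous (fun t => f t * g t).
Proof. move=> hf hg t; have := continuousM (hf t) (hg t); exact. Qed.
Lemma cC (c : R) : continuous (fun _ : R => c).
Proof. exact: cst_continuous. Qed.
Lemma cV (f : R -> R) : (forall t, f t != 0) -> continuous f -> continuous (fun t => (f t)^-1).
Proof. move=> h hf t; have := continuousV (h t) (hf t); exact. Qed.
Lemma cS (f : 'I_n -> R -> R) : (forall i, continuous (f i)) ->
  continuous (fun t => \sum_i f i t).
Proof.
move=> hf; have -> : (fun t => \sum_i f i t) = \sum_i f i by rewrite fct_sumE.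
elim/big_ind : _ => //; first exact: cC.
move=> g h hg hh t; have := continuousD (hg t) (hh t); exact.
Qed.
Lemma csqrt (f : R -> R) : continuous f -> continuous (fun t => Num.sqrt (f t)).
Proof.
move=> hf t; apply: (@continuous_comp _ _ _ f Num.sqrt t (hf t)).
exact: sqrt_continuous.
Qed.

Definition Q (x v : V) : R := sq v + qf x * dot x v ^+ 2.

Lemma C1_cont (c : R -> V) : C1_curve c -> continuous c.
Proof.
move=> [hd _] t; apply: differentiable_continuous.
exact/derivable1_diffP.
Qed.

Lemma C1_coord_der (c : R -> V) i (t : R) : C1_curve c ->
  is_derive t 1 (fun s => c s 0 i) ((derive1 c t) 0 i).
Proof.
move=> hc; have hd := (derivable_mxP c t 1).1 (hc.1 t) 0 i.
apply: DeriveDef => //.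
by rewrite derive1E (derive_mx (hc.1 t)) mxE.
Qed.

Lemma C1_coord_cont (c : R -> V) i : C1_curve c -> continuous (fun t => c t 0 i).
Proof.
move=> hc t; apply: (@continuous_comp _ _ _ c (fun M : V => M 0 i) t).
  exact: C1_cont.
exact: coord_continuous.
Qed.

Lemma C1_dcoord_cont (c : R -> V) i : C1_curve c -> continuous (fun t => (derive1 c t) 0 i).
Proof.
move=> hc t; apply: (@continuous_comp _ _ _ (derive1 c) (fun M : V => M 0 i) t).
  exact: hc.2.
exact: coord_continuous.
Qed.

Lemma Itg_cont (c : R -> V) : C1_curve c ->
  continuous (fun t => Num.sqrt (Q (c t) (derive1 c t))).
Proof.
move=> hc; apply: csqrt.
have -> : (fun t => Q (c t) (derive1 c t)) = (fun t => sq (derive1 c t)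
   + qf (c t) * (dot (c t) (derive1 c t) * dot (c t) (derive1 c t))).
  by apply/funext => t; rewrite /Q expr2.
rewrite /sq /dot /qf.
apply: cD.
  by apply: cS => i; apply: cM; apply: C1_dcoord_cont.
apply: cM.
  apply: cV.
    by move=> t; rewrite gt_eqF //; have := sq_ge0 (c t); rewrite /sq /dot; lra.
  by apply: cD; [apply: cC | apply: cS => i; apply: cM; apply: C1_coord_cont].
by apply: cM; apply: cS => i; apply: cM; [apply: C1_coord_cont|apply: C1_dcoord_cont|apply: C1_coord_cont|apply: C1_dcoord_cont].
Qed.

Lemma len_eq (c : R -> V) : curve_length gm c =
  Rintegral (@lebesgue_measure R) `[0, 1] (fun t => Num.sqrt (Q (c t) (derive1 c t))).
Proof. by rewrite /curve_length; congr Rintegral; apply/funext => t; rewrite Qform. Qed.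


Lemma dotC u v : dot u v = dot v u.
Proof. by rewrite /dot; apply: eq_bigr => i _; rewrite mulrC. Qed.
Lemma dotDl u w v : dot (u + w) v = dot u v + dot w v.
Proof. by rewrite /dot -big_split; apply: eq_bigr => i _; rewrite mxE mulrDl. Qed.
Lemma dotBl u w v : dot (u - w) v = dot u v - dot w v.
Proof. by rewrite /dot -sumrB; apply: eq_bigr => i _; rewrite !mxE mulrBl. Qed.
Lemma dotZl k u v : dot (k *: u) v = k * dot u v.
Proof. by rewrite /dot mulr_sumr; apply: eq_bigr => i _; rewrite mxE mulrA. Qed.
Lemma dotNl u v : dot (- u) v = - dot u v.
Proof. by rewrite -scaleN1r dotZl mulN1r. Qed.

Lemma le_sqrt_sq (a b : R) : b ^+ 2 <= a -> b <= Num.sqrt a.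
Proof.
move=> h; apply: (le_trans (ler_norm b)); rewrite -sqrtr_sqr.
exact: ler_wsqrtr.
Qed.

Lemma Itg_int (c : R -> V) : C1_curve c ->
  (@lebesgue_measure R).-integrable `[0, 1]
     (EFin \o (fun t => Num.sqrt (Q (c t) (derive1 c t)))).
Proof.
move=> hc; apply: continuous_compact_integrable; first exact: segment_compact.
exact/continuous_subspaceT/Itg_cont.
Qed.

Lemma len_ge (c : R -> V) (e : V) : C1_curve c -> sq e = 1 ->
  dot (c 1 - c 0) e <= curve_length gm c.
Proof.
move=> hc he; rewrite len_eq.
pose f t := dot (derive1 c t) e.
pose F t := dot (c t) e.
have cf : continuous f.
  by rewrite /f /dot; apply: cS => i; apply: cM; [apply: C1_dcoord_cont|apply: cC].
have cF : continuous F.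
  by rewrite /F /dot; apply: cS => i; apply: cM; [apply: C1_coord_cont|apply: cC].
have dF : forall t : R, is_derive t 1 F (f t).
  move=> t; rewrite /F /f /dot.
  have -> : (fun s => \sum_i c s 0 i * e 0 i) = \sum_i (fun s => c s 0 i * e 0 i).
    by rewrite fct_sumE.
  apply: is_derive_sum => i.
  have h := is_deriveM (C1_coord_der i t hc) (is_derive_cst (e 0 i) t 1).
  apply: (is_derive_eq h).
  by rewrite scaler0 add0r /GRing.scale /= mulrC.
have ftc := @continuous_FTC2 R f F 0 1 ltr01 (continuous_subspaceT cf).
have hint : Rintegral (@lebesgue_measure R) `[0, 1] f = F 1 - F 0.
  rewrite /Rintegral ftc //.
  - split.
    + by move=> t _; case: (dF t).
    + exact: cvg_at_right_filter (cF 0).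
    + exact: cvg_at_left_filter (cF 1).
  - by move=> t _; rewrite derive1E; apply: derive_val.
have -> : dot (c 1 - c 0) e = F 1 - F 0 by rewrite dotBl.
rewrite -hint; apply: le_Rintegral.
- exact: measurable_itv.
- apply: continuous_compact_integrable; first exact: segment_compact.
  exact/continuous_subspaceT.
- exact: Itg_int.
- move=> t _; apply: le_sqrt_sq; rewrite /f /Q.
  apply: (le_trans (cauchy_schwarz _ _)); rewrite he mulr1 lerDl.
  by rewrite mulr_ge0 ?sqr_ge0 // ltW // qf_gt0.
Qed.

Definition line (a w : V) := fun t : R => a + t *: w.

Lemma line_coord a w i j : (fun s => line a w s i j) = (fun s => a i j + s * w i j).
Proof. by apply/funext => s; rewrite /line !mxE. Qed.

Lemma line_der_coord a w i j (t : R) : is_derive t 1 (fun s => line a w s i j) (w i j).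
Proof.
rewrite line_coord.
have h := is_deriveD (is_derive_cst (a i j) t 1)
   (is_deriveM (is_derive_id t (1 : R)) (is_derive_cst (w i j) t 1)).
apply: (is_derive_eq h).
by rewrite scaler0 !add0r; apply: mulr1.
Qed.

Lemma line_derivable a w (t : R) : derivable (line a w) t 1.
Proof. by apply/derivable_mxP => i j; have [] := @line_der_coord a w i j t. Qed.

Lemma line_d1 a w (t : R) : derive1 (line a w) t = w.
Proof.
rewrite derive1E (derive_mx (@line_derivable a w t)); apply/matrixP => i j.
by rewrite mxE; apply: derive_val; exact: line_der_coord.
Qed.

Lemma line_C1 a w : C1_curve (line a w).
Proof.
split; first exact: line_derivable.
have -> : derive1 (line a w) = fun _ => w by apply/funext => t; rewrite line_d1.
exact: cst_continuous.
Qed.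

Lemma Q_le y w : Q y w <= 2 * sq w.
Proof.
rewrite /Q.
have h1 := cauchy_schwarz y w.
have hq := qf_gt0 y; have hs := sq_ge0 y; have hw := sq_ge0 w.
have e : qf y * sq y = 1 - qf y by have := qfE y; lra.
have : qf y * dot y w ^+ 2 <= qf y * (sq y * sq w) by rewrite ler_pM2l.
rewrite mulrA e.
have : 0 <= qf y * sq w by rewrite mulr_ge0 // ltW.
nra.
Qed.

Lemma len_line a w : curve_length gm (line a w) <= Num.sqrt (2 * sq w).
Proof.
rewrite len_eq.
apply: (@le_trans _ _ (Rintegral (@lebesgue_measure R) `[0, 1]
   (fun _ => Num.sqrt (2 * sq w)))).
  apply: le_Rintegral.
  - exact: measurable_itv.
  - exact/Itg_int/line_C1.
  - apply: continuous_compact_integrable; first exact: segment_compact.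
    exact/continuous_subspaceT/cst_continuous.
  - by move=> t _; rewrite line_d1; apply: ler_wsqrtr; apply: Q_le.
rewrite Rintegral_cst; last exact: measurable_itv.
have h1 : (@lebesgue_measure R `[0, 1]%classic) = 1%:E.
  by rewrite lebesgue_measure_itv /= lte_fin ltr01 -EFinD subr0.
rewrite [X in fine X](_ : _ = 1%:E); last exact: h1.
by rewrite /= mulr1.
Qed.


Definition Sset (a b : V) := [set L | exists c, [/\ C1_curve c, c 0 = a, c 1 = b &
                            L = curve_length gm c]].

Lemma rdE a b : riem_dist gm a b = inf (Sset a b).
Proof. by []. Qed.

Lemma len_ge0 (c : R -> V) : 0 <= curve_length gm c.
Proof. by apply: Rintegral_ge0 => t _; apply: sqrtr_ge0. Qed.

Lemma Sset_ne a b : Sset a b !=set0.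
Proof.
exists (curve_length gm (line a (b - a))), (line a (b - a)); split => //.
- exact: line_C1.
- by rewrite /line scale0r addr0.
- by rewrite /line scale1r addrC subrK.
Qed.

Lemma Sset_lb a b : has_lbound (Sset a b).
Proof. by exists 0 => L [c [_ _ _ ->]]; apply: len_ge0. Qed.

Lemma rd_le a b : riem_dist gm a b <= Num.sqrt (2 * sq (b - a)).
Proof.
rewrite rdE; apply: le_trans (len_line a (b - a)).
apply: (ge_inf (Sset_lb a b)); exists (line a (b - a)); split => //.
- exact: line_C1.
- by rewrite /line scale0r addr0.
- by rewrite /line scale1r addrC subrK.
Qed.

Lemma rd_ge a b e : sq e = 1 -> dot (b - a) e <= riem_dist gm a b.
Proof.
move=> he; rewrite rdE; apply: lb_le_inf; first exact: Sset_ne.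
by move=> L [c [hc h0 h1 ->]]; rewrite -h0 -h1; apply: len_ge.
Qed.

Lemma rd_ge0 a b : 0 <= riem_dist gm a b.
Proof.
rewrite rdE; apply: lb_le_inf; first exact: Sset_ne.
by move=> L [c [_ _ _ ->]]; apply: len_ge0.
Qed.

Definition Sr (e x : V) : V := x - (2 * dot x e) *: e.

Lemma dot_Sr e u v : sq e = 1 -> dot (Sr e u) (Sr e v) = dot u v.
Proof.
move=> he.
have L : forall a b, dot a (b - (2 * dot b e) *: e) = dot a b - 2 * dot b e * dot a e.
  by move=> a b; rewrite dotC dotBl dotZl (dotC b a) (dotC e a).
rewrite /Sr dotBl dotZl !L (dotC e v); move: he; rewrite /sq => he.
rewrite he; ring.
Qed.

Lemma Q_Sr e y w : sq e = 1 -> Q (Sr e y) (Sr e w) = Q y w.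
Proof. by move=> he; rewrite /Q /qf /sq !dot_Sr. Qed.

Lemma Sr_invol e x : sq e = 1 -> Sr e (Sr e x) = x.
Proof.
move=> he; apply/rowP => j; rewrite /Sr !mxE.
have -> : dot (x - (2 * dot x e) *: e) e = - dot x e.
  by rewrite dotBl dotZl; move: he; rewrite /sq => ->; ring.
ring.
Qed.

Lemma rdB (f g : R -> R) (t : R) a b : is_derive t 1 f a -> is_derive t 1 g b ->
  is_derive t 1 (fun s => f s - g s) (a - b).
Proof. by move=> ha hb; exact: is_deriveB. Qed.
Lemma rdM (f g : R -> R) (t : R) a b : is_derive t 1 f a -> is_derive t 1 g b ->
  is_derive t 1 (fun s => f s * g s) (f t * b + g t * a).
Proof. by move=> ha hb; exact: is_deriveM. Qed.
Lemma rdC (c t : R) : is_derive t 1 (fun _ : R => c) 0.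
Proof. exact: is_derive_cst. Qed.
Lemma rdS (h : 'I_n -> R -> R) (dh : 'I_n -> R) (t : R) :
  (forall i, is_derive t 1 (h i) (dh i)) ->
  is_derive t 1 (fun s => \sum_i h i s) (\sum_i dh i).
Proof.
move=> hd; have -> : (fun s => \sum_i h i s) = \sum_i h i by rewrite fct_sumE.
exact: is_derive_sum.
Qed.

Lemma Sr_coord e (c : R -> V) j :
  (fun s => Sr e (c s) 0 j) = (fun s => c s 0 j - (2 * \sum_k c s 0 k * e 0 k) * e 0 j).
Proof. by apply/funext => s; rewrite /Sr !mxE. Qed.

Lemma Sr_der_coord e (c : R -> V) j (t : R) : C1_curve c ->
  is_derive t 1 (fun s => Sr e (c s) 0 j) (Sr e (derive1 c t) 0 j).
Proof.
move=> hc; rewrite Sr_coord.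
have hS : is_derive t 1 (fun s => \sum_k c s 0 k * e 0 k)
    (\sum_k (c t 0 k * 0 + e 0 k * derive1 c t 0 k)).
  by apply: rdS => k; exact: (rdM (C1_coord_der k t hc) (rdC (e 0 k) t)).
have h := rdB (C1_coord_der j t hc) (rdM (rdM (rdC 2 t) hS) (rdC (e 0 j) t)).
apply: (is_derive_eq h).
rewrite /Sr !mxE /dot.
have es : \sum_k (c t 0 k * 0 + e 0 k * derive1 c t 0 k) = \sum_k derive1 c t 0 k * e 0 k.
  by apply: eq_bigr => k _; ring.
rewrite es; ring.
Qed.

Lemma Sr_derivable e (c : R -> V) (t : R) : C1_curve c ->
  derivable (fun s => Sr e (c s)) t 1.
Proof.
move=> hc; apply/derivable_mxP => i j; rewrite (ord1 i).
by have [] := @Sr_der_coord e c j t hc.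
Qed.

Lemma Sr_d1 e (c : R -> V) (t : R) : C1_curve c ->
  derive1 (fun s => Sr e (c s)) t = Sr e (derive1 c t).
Proof.
move=> hc; rewrite derive1E (derive_mx (@Sr_derivable e c t hc)).
apply/matrixP => i j; rewrite mxE (ord1 i).
by apply: derive_val; exact: Sr_der_coord.
Qed.

Lemma Sr_C1 e (c : R -> V) : C1_curve c -> C1_curve (fun s => Sr e (c s)).
Proof.
move=> hc; split; first by move=> t; exact: Sr_derivable.
have -> : derive1 (fun s => Sr e (c s)) = fun t => Sr e (derive1 c t).
  by apply/funext => t; rewrite Sr_d1.
have cs : continuous (fun t => 2 * dot (derive1 c t) e).
  apply: cM; first exact: cC.
  by rewrite /dot; apply: cS => i; apply: cM; [apply: C1_dcoord_cont|apply: cC].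
move=> t; rewrite /Sr.
have := continuousB (hc.2 t) (@continuousZr_tmp _ _ _ _ e _ (cs t)); exact.
Qed.

Lemma len_Sr e (c : R -> V) : sq e = 1 -> C1_curve c ->
  curve_length gm (fun s => Sr e (c s)) = curve_length gm c.
Proof.
move=> he hc; rewrite !len_eq; congr Rintegral; apply/funext => t.
by rewrite Sr_d1 // Q_Sr.
Qed.

Lemma rd_Sr e a b : sq e = 1 -> riem_dist gm (Sr e a) (Sr e b) <= riem_dist gm a b.
Proof.
move=> he; rewrite [X in _ <= X]rdE; apply: lb_le_inf; first exact: Sset_ne.
move=> L [c [hc h0 h1 ->]]; rewrite rdE; apply: (ge_inf (Sset_lb _ _)).
exists (fun s => Sr e (c s)); split.
- exact: Sr_C1.
- by rewrite h0.
- by rewrite h1.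
- by rewrite len_Sr.
Qed.

Lemma rd_Sr_eq e a b : sq e = 1 -> riem_dist gm (Sr e a) (Sr e b) = riem_dist gm a b.
Proof.
move=> he; apply/eqP; rewrite eq_le rd_Sr //=.
by have := rd_Sr (Sr e a) (Sr e b) he; rewrite !Sr_invol.
Qed.


Lemma dotZr k u v : dot u (k *: v) = k * dot u v.
Proof. by rewrite dotC dotZl dotC. Qed.
Lemma dotBr u v w : dot u (v - w) = dot u v - dot u w.
Proof. by rewrite dotC dotBl !(dotC u). Qed.
Lemma dotNr u v : dot u (- v) = - dot u v.
Proof. by rewrite dotC dotNl dotC. Qed.

Lemma sq_eb k : sq (ebasis R k) = 1.
Proof. by rewrite /sq dot_eb eb_coord /dl eqxx. Qed.

Lemma exists_perp (p : V) : (2 <= n)%N -> exists e, sq e = 1 /\ dot p e = 0.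
Proof.
move=> hn.
have h0 : (0 < n)%N by apply: leq_trans hn.
pose i0 : 'I_n := Ordinal h0.
pose i1 : 'I_n := Ordinal hn.
have d01 : dl i1 i0 = 0 by rewrite /dl.
have d10 : dl i0 i1 = 0 by rewrite /dl.
have d00 : dl i0 i0 = 1 by rewrite /dl eqxx.
have d11 : dl i1 i1 = 1 by rewrite /dl eqxx.
have [/andP [/eqP z0 /eqP z1] | nz] := boolP ((p 0 i0 == 0) && (p 0 i1 == 0)).
  by exists (ebasis R i0); rewrite sq_eb dot_eb z0.
pose w : V := p 0 i1 *: ebasis R i0 - p 0 i0 *: ebasis R i1.
pose m := p 0 i1 ^+ 2 + p 0 i0 ^+ 2.
have pw : dot p w = 0.
  by rewrite /w dotBr !dotZr !dot_eb; ring.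
have dw0 : dot w (ebasis R i0) = p 0 i1.
  by rewrite /w dotBl !dotZl !dot_eb !eb_coord d00 d01; ring.
have dw1 : dot w (ebasis R i1) = - p 0 i0.
  by rewrite /w dotBl !dotZl !dot_eb !eb_coord d10 d11; ring.
have sw : sq w = m by rewrite /sq {1}/w dotBr !dotZr dw0 dw1 /m; ring.
have mpos : 0 < m.
  have g0 := sqr_ge0 (p 0 i0); have g1 := sqr_ge0 (p 0 i1).
  rewrite /m; move: nz; rewrite negb_and => /orP [h|h].
    have : 0 < p 0 i0 ^+ 2 by rewrite lt0r sqrf_eq0 h sqr_ge0.
    lra.
  have : 0 < p 0 i1 ^+ 2 by rewrite lt0r sqrf_eq0 h sqr_ge0.
  lra.
exists ((Num.sqrt m)^-1 *: w); split.
  rewrite /sq dotZl dotZr -/(sq w) sw.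
  have := sqr_sqrtr (ltW mpos); have : Num.sqrt m != 0 by rewrite sqrtr_eq0 -ltNge.
  move=> hs e; rewrite -[m in _ * (_ * m)]e; field; exact: hs.
by rewrite dotZr pw mulr0.
Qed.


Lemma sphere_main (p : V) (eps r0 : R) : (2 <= n)%N -> 0 < eps ->
  exists r : R, r0 < r /\
    (((1 - eps) * r)%:E <= riem_diam gm (metric_sphere gm p r))%E.
Proof.
move=> hn heps.
have [e [he hpe]] := exists_perp p hn.
pose t := Num.max r0 0 + 1.
have hm0 : 0 <= Num.max r0 0 by rewrite le_max lexx orbT.
have hm1 : r0 <= Num.max r0 0 by rewrite le_max lexx.
have ht0 : 0 < t by rewrite /t; lra.
have htr : r0 < t by rewrite /t; lra.
pose q1 := p + t *: e.
pose q2 := p - t *: e.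
have Sp : Sr e p = p by rewrite /Sr hpe mulr0 scale0r subr0.
have Sq1 : Sr e q1 = q2.
  rewrite /Sr /q1 dotDl dotZl hpe; move: he; rewrite /sq => he; rewrite he.
  by apply/rowP => j; rewrite /q2 !mxE; ring.
pose r := riem_dist gm p q1.
have hr1 : t <= r.
  have := rd_ge p q1 he.
  have -> : q1 - p = t *: e by rewrite /q1 addrAC subrr add0r.
  by rewrite dotZl; move: he; rewrite /sq => ->; rewrite mulr1.
have hr2 : r <= 2 * t.
  apply: (le_trans (rd_le p q1)).
  have -> : q1 - p = t *: e by rewrite /q1 addrAC subrr add0r.
  rewrite /sq dotZl dotZr; move: he; rewrite /sq => ->.
  rewrite -[X in _ <= X](@ger0_norm _ (2 * t)); last by lra.
  rewrite -sqrtr_sqr; apply: ler_wsqrtr.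
  have : 0 <= t * t by rewrite mulr_ge0 //; lra.
  rewrite expr2; nra.
have hd : 2 * t <= riem_dist gm q1 q2.
  have hne : sq (- e) = 1 by rewrite /sq dotNl dotNr opprK.
  have := rd_ge q1 q2 hne.
  have -> : q2 - q1 = (- 2 * t) *: e.
    by apply/rowP => j; rewrite /q1 /q2 !mxE; ring.
  rewrite dotZl dotNr; move: he; rewrite /sq => ->.
  by rewrite (_ : - 2 * t * - 1 = 2 * t) //; ring.
have m1 : metric_sphere gm p r q1 by [].
have m2 : metric_sphere gm p r q2.
  by rewrite /metric_sphere /= -Sq1 -[in LHS]Sp rd_Sr_eq.
exists r; split; first lra.
apply: (@le_trans _ _ (riem_dist gm q1 q2)%:E).
  rewrite lee_fin.
  have : 0 <= eps * r by rewrite mulr_ge0 //; lra.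
  lra.
apply: ereal_sup_ubound; exists q1 => //; exists q2 => //.
Qed.


Lemma coord_bound (a b : V) i : `|b 0 i - a 0 i| <= riem_dist gm a b.
Proof.
have h1 := rd_ge a b (sq_eb i).
have hne : sq (- ebasis R i) = 1 by rewrite /sq dotNl dotNr opprK; exact: sq_eb.
have h2 := rd_ge a b hne.
move: h1 h2; rewrite dotNr dot_eb !mxE => h1 h2.
by rewrite ler_norml; apply/andP; split; lra.
Qed.

Lemma gm_complete : complete_metric gm.
Proof.
move=> u hu.
have hcv : forall i, cvg ((fun m => u m 0 i) @ \oo).
  move=> i; apply: cauchy_cvg; apply: cauchy_exP => eps heps.
  have [N hN] := hu eps heps.
  exists (u N 0 i); exists N => // m /= hm.
  rewrite /ball /=.
  exact: le_lt_trans (coord_bound (u m) (u N) i) (hN m N hm (leqnn N)).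
pose l : V := \row_i lim ((fun m => u m 0 i) @ \oo).
exists l => eps heps.
pose del := eps / (2 * (n%:R + 1)).
have hn0 : (0 : R) <= n%:R by [].
have hden : 0 < 2 * (n%:R + 1) :> R by lra.
have hdel : 0 < del by rewrite /del divr_gt0.
have hdelE : del * (2 * (n%:R + 1)) = eps by rewrite /del mulfVK // gt_eqF.
have hi : forall i, exists N, forall m, (N <= m)%N ->
    `|lim ((fun m => u m 0 i) @ \oo) - u m 0 i| < del.
  move=> i; have := (cvgrPdist_lt _ _).1 (hcv i) del hdel.
  by move=> [N _ hN]; exists N => m hm; exact: hN m hm.
have Nf : forall i, {N | forall m, (N <= m)%N ->
    `|lim ((fun m => u m 0 i) @ \oo) - u m 0 i| < del}.
  by move=> i; apply: cid; exact: hi.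
exists (\max_i sval (Nf i)) => m hm.
apply: le_lt_trans (rd_le (u m) l) _.
have hb : forall i, (l - u m) 0 i * (l - u m) 0 i <= del ^+ 2.
  move=> i; rewrite !mxE.
  have := proj2_sig (Nf i) m (leq_trans (leq_bigmax i) hm).
  rewrite ltr_norml => /andP [h1 h2].
  nra.
have hsq : sq (l - u m) <= n%:R * del ^+ 2.
  rewrite /sq /dot -sum_const; apply: ler_sum => i _; exact: hb.
have hs0 := sq_ge0 (l - u m).
rewrite -[X in _ < X](@gtr0_norm _ eps) // -sqrtr_sqr ltr_sqrt; last first.
  by rewrite exprn_gt0.
apply: (le_lt_trans (_ : _ <= 2 * (n%:R * del ^+ 2))).
  by rewrite ler_pM2l.
rewrite -hdelE.
have : 0 < del ^+ 2 by rewrite exprn_gt0.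
have : 0 <= n%:R * del ^+ 2 by rewrite mulr_ge0 // ltW // exprn_gt0.
move=> h1 h2.
rewrite !expr2 in h1 h2 *.
nra.
Qed.

End Main.

Unset Implicit Arguments.

Theorem corollary2 (R : realType) :
  exists N : nat, forall n : nat, (N <= n)%N ->
    exists g : 'rV[R]_n -> 'M[R]_n,
      [/\ riemannian_metric g, complete_metric g, positive_ricci g &
        forall p : 'rV[R]_n, forall eps : R, 0 < eps -> forall r0 : R,
          exists r : R, r0 < r /\
            (((1 - eps) * r)%:E <= riem_diam g (metric_sphere g p r))%E].
Proof.
exists 4%N => n hn; exists (@gm R n); split.
- exact: gm_metric.
- exact: gm_complete.
- exact: gm_ricci.
- move=> p eps heps r0; apply: sphere_main => //.
  exact: leq_trans _ hn.
Qed.
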